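(* Let $\mathbb X$ be a basic space and $\mathcal D=(D,<,\rho)$ a computable partially ordered set. Every partial function in $\mathrm{Max}_{\mathrm{PR}}[\mathbb X\to\mathcal D]$ or in $\mathrm{Min}_{\mathrm{PR}}[\mathbb X\to\mathcal D]$ has a $\Sigma^0_1\wedge\Pi^0_1$ graph and a $\Sigma^0_2$ domain.
   Context: A basic space is a finite non-empty product of sets each of which is $\mathbb N$, $\mathbb Z$, or $A^*$ for some finite alphabet $A$. A computable partially ordered set is a triple $\mathcal D=(D,<,\rho)$ where $\rho:\mathbb N\to D$ is a bijection and $<$ is a strict partial order on $D$ with $\{(m,n):\rho(m)<\rho(n)\}$ computable; a partial function into $D$ is partial computable if its composition with $\rho^{-1}$ is. For a partial $f:\mathbb X\times\mathbb N\to D$ monotone increasing (resp. decreasing) in its second argument on its domain, $\max^{\mathcal D}f$ (resp. $\min^{\mathcal D}f$) is the partial function defined exactly at those $x$ for which $\{f(x,t):t,\ f(x,t)\text{ defined}\}$ is finite and non-empty, with value its maximum (resp. minimum). $\mathrm{Max}_{\mathrm{PR}}[\mathbb X\to\mathcal D]$ (resp. $\mathrm{Min}_{\mathrm{PR}}[\mathbb X\to\mathcal D]$) is the class of all $\max^{\mathcal D}f$ (resp. $\min^{\mathcal D}f$) with $f$ partial computable and monotone increasing (resp. decreasing) in its second argument. A relation $R\subseteq\mathbb X\times D$ is $\Sigma^0_n$, $\Pi^0_n$, or $\Sigma^0_1\wedge\Pi^0_1$ (conjunction of a $\Sigma^0_1$ and a $\Pi^0_1$ relation) if so is $\{(x,n):(x,\rho(n))\in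 R\}\subseteq\mathbb X\times\mathbb N$ in the arithmetical hierarchy. *)

(* Defs.v *)
From mathcomp Require Import all_boot.
From mathcomp Require Import ssralg ssrint.
From Stdlib Require List.

Set Implicit Arguments.
Unset Strict Implicit.
Unset Printing Implicit Defensive.

Definition vcons k (x : nat) (v : 'I_k -> nat) : 'I_k.+1 -> nat :=
  fun i => if unlift ord0 i is Some j then v j else x.

Definition vtail k (w : 'I_k.+1 -> nat) : 'I_k -> nat :=
  fun j => w (lift ord0 j).

Definition vsnoc k (v : 'I_k -> nat) (x : nat) : 'I_k.+1 -> nat :=
  fun i => if unlift ord_max i is Some j then v j else x.

Definition vapp m n (u : 'I_m -> nat) (v : 'I_n -> nat) : 'I_(m + n) -> nat :=
  fun i => match split i with inl a => u a | inr b => v b end.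

Inductive recf : nat -> Type :=
| rZero (k : nat) : recf k
| rSucc : recf 1
| rProj (k : nat) (i : 'I_k) : recf k
| rComp (k m : nat) (g : recf m) (hs : 'I_m -> recf k) : recf k
| rPrec (k : nat) (g : recf k) (h : recf k.+2) : recf k.+1   (* prim. rec. on 1st arg *)
| rMu (k : nat) (h : recf k.+1) : recf k.                    (* minimisation on 1st arg *)

Inductive evalr : forall k, recf k -> ('I_k -> nat) -> nat -> Prop :=
| eZero k v : evalr (rZero k) v 0
| eSucc v : evalr rSucc v (v ord0).+1
| eProj k (i : 'I_k) v : evalr (rProj i) v (v i)
| eComp k m (g : recf m) (hs : 'I_m -> recf k) v (ys : 'I_m -> nat) y :
    (forall j, evalr (hs j) v (ys j)) -> evalr g ys y -> evalr (rComp g hs) v y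
| ePrec0 k (g : recf k) (h : recf k.+2) (w : 'I_k.+1 -> nat) y :
    w ord0 = 0 -> evalr g (vtail w) y -> evalr (rPrec g h) w y
| ePrecS k (g : recf k) (h : recf k.+2) (w : 'I_k.+1 -> nat) n z y :
    w ord0 = n.+1 ->
    evalr (rPrec g h) (vcons n (vtail w)) z ->
    evalr h (vcons n (vcons z (vtail w))) y ->
    evalr (rPrec g h) w y
| eMu k (h : recf k.+1) v n (zs : nat -> nat) :
    evalr h (vcons n v) 0 ->
    (forall m, m < n -> zs m <> 0 /\ evalr h (vcons m v) (zs m)) ->
    evalr (rMu h) v n.

Definition comp_pred k (P : ('I_k -> nat) -> Prop) : Prop :=
  exists phi : recf k, forall v,
    (P v -> evalr phi v 1) /\ (~ P v -> evalr phi v 0).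

Inductive bcomp := CNat | CInt | CWord of nat.

Definition compT (c : bcomp) : Type :=
  match c with CNat => nat | CInt => int | CWord a => seq 'I_a end.

(* standard injective (bijective for N, Z and a >= 1) computable codings *)
Definition encC (c : bcomp) : compT c -> nat :=
  match c return compT c -> nat with
  | CNat => fun n => n
  | CInt => fun z => match z with Posz n => n.*2 | Negz n => n.*2.+1 end
  | CWord a => fun w => foldr (fun (s : 'I_a) acc => s.+1 + a * acc) 0 w
  end.

(* a basic space is given by a non-empty list X of components;
   its elements are the tuples below *)
Definition bel (X : seq bcomp) : Type :=
  forall i : 'I_(size X), compT (nth CNat X i).

Definition enc (X : seq bcomp) (x : bel X) : 'I_(size X) -> nat :=
  fun i => encC (x i).

Section Hierarchy.
Local Unset Implicit Arguments.
Variable X : seq bcomp.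

Fixpoint Sigma (n j : nat) (P : bel X -> ('I_j -> nat) -> Prop) : Prop :=
  match n with
  | 0 => exists phi : recf (size X + j), forall x v,
           (P x v -> evalr phi (vapp (enc x) v) 1) /\
           (~ P x v -> evalr phi (vapp (enc x) v) 0)
  | n'.+1 => exists Q : bel X -> ('I_j.+1 -> nat) -> Prop,
           (exists R : bel X -> ('I_j.+1 -> nat) -> Prop, Sigma n' j.+1 R /\ forall x v, Q x v <-> ~ R x v) /\
           (forall x v, P x v <-> exists m, Q x (vsnoc v m))
  end.

Definition Pi (n j : nat) (P : bel X -> ('I_j -> nat) -> Prop) : Prop :=
  exists R, Sigma n j R /\ forall x v, P x v <-> ~ R x v.

Definition Sigma1_and_Pi1 (j : nat) (P : bel X -> ('I_j -> nat) -> Prop) : Prop :=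
  exists A B, Sigma 1 j A /\ Pi 1 j B /\ forall x v, P x v <-> A x v /\ B x v.

Definition pcomp (j : nat) (F : bel X -> ('I_j -> nat) -> nat -> Prop) : Prop :=
  exists phi : recf (size X + j), forall x v y,
    evalr phi (vapp (enc x) v) y <-> F x v y.

End Hierarchy.

Definition strict_po (D : Type) (lt : D -> D -> Prop) : Prop :=
  (forall d, ~ lt d d) /\ (forall a b c, lt a b -> lt b c -> lt a c).

Definition computable_poset (D : Type) (lt : D -> D -> Prop) (rho : nat -> D) :=
  [/\ bijective rho, strict_po lt &
      comp_pred (fun v : 'I_2 -> nat => lt (rho (v ord0)) (rho (v ord_max)))].

Section MaxMin.
Local Unset Implicit Arguments.
Variables (X : seq bcomp) (D : Type) (lt : D -> D -> Prop) (rho : nat -> D).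

Definition pcompD (f : bel X -> nat -> option D) : Prop :=
  pcomp X 1 (fun x v y => f x (v ord0) = Some (rho y)).

Definition mono_incr (f : bel X -> nat -> option D) : Prop :=
  forall x t t' d d', t <= t' -> f x t = Some d -> f x t' = Some d' ->
    d = d' \/ lt d d'.

Definition mono_decr (f : bel X -> nat -> option D) : Prop :=
  forall x t t' d d', t <= t' -> f x t = Some d -> f x t' = Some d' ->
    d' = d \/ lt d' d.

Definition vals (f : bel X -> nat -> option D) (x : bel X) (e : D) : Prop :=
  exists t, f x t = Some e.

Definition finite_set (S : D -> Prop) : Prop :=
  exists l : list D, forall e, S e <-> List.In e l.

Definition is_maxD (f : bel X -> nat -> option D) (g : bel X -> option D) : Prop :=
  forall x,
    (g x <> None <-> (finite_set (vals f x) /\ exists e, vals f x e)) /\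
    (forall d, g x = Some d ->
       vals f x d /\ forall e, vals f x e -> e = d \/ lt e d).

Definition is_minD (f : bel X -> nat -> option D) (g : bel X -> option D) : Prop :=
  forall x,
    (g x <> None <-> (finite_set (vals f x) /\ exists e, vals f x e)) /\
    (forall d, g x = Some d ->
       vals f x d /\ forall e, vals f x e -> d = e \/ lt d e).

Definition MaxPR (g : bel X -> option D) : Prop :=
  exists f, pcompD f /\ mono_incr f /\ is_maxD f g.

Definition MinPR (g : bel X -> option D) : Prop :=
  exists f, pcompD f /\ mono_decr f /\ is_minD f g.

End MaxMin.

(* Main.v *)
Require Import Defs.
From mathcomp Require Import all_boot.
From Stdlib Require Import FunctionalExtensionality Classical ClassicalEpsilon.
Set Implicit Arguments. Unset Strict Implicit. Unset Printing Implicit Defensive.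


Lemma vcons0 k x (v : 'I_k -> nat) : vcons x v ord0 = x.
Proof. by rewrite /vcons unlift_none. Qed.
Lemma vconsS k x (v : 'I_k -> nat) j : vcons x v (lift ord0 j) = v j.
Proof. by rewrite /vcons liftK. Qed.
Lemma vsnocM k (v : 'I_k -> nat) x : vsnoc v x ord_max = x.
Proof. by rewrite /vsnoc unlift_none. Qed.
Lemma vsnocS k (v : 'I_k -> nat) x j : vsnoc v x (lift ord_max j) = v j.
Proof. by rewrite /vsnoc liftK. Qed.
Lemma vtail_vcons k x (v : 'I_k -> nat) : vtail (vcons x v) = v.
Proof. by apply: functional_extensionality => j; rewrite /vtail vconsS. Qed.
Lemma vcons_eta k (w : 'I_k.+1 -> nat) : vcons (w ord0) (vtail w) = w.
Proof.
apply: functional_extensionality => i.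
by case: (unliftP ord0 i) => [j|] ->; rewrite ?vconsS ?vcons0.
Qed.
Lemma lift_max0 n : lift ord_max (ord0 : 'I_n.+1) = ord0 :> 'I_n.+2.
Proof. by apply: val_inj. Qed.
Lemma lift_comm n (j : 'I_n) : lift ord_max (lift ord0 j) = lift ord0 (lift ord_max j) :> 'I_n.+2.
Proof. apply: val_inj; case: j => j hj; rewrite /= /bump /=.
by rewrite !add1n ltnS leqNgt hj. Qed.
Lemma max_lift0 n : (ord_max : 'I_n.+2) = lift ord0 ord_max.
Proof. by apply: val_inj. Qed.
Lemma vsnoc_vcons k x (r : 'I_k -> nat) f : vsnoc (vcons x r) f = vcons x (vsnoc r f).
Proof.
apply: functional_extensionality => i.
case: (unliftP ord_max i) => [j|] ->.
  rewrite vsnocS; case: (unliftP ord0 j) => [j'|] ->.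
    by rewrite vconsS lift_comm vconsS vsnocS.
  by rewrite vcons0 lift_max0 vcons0.
by rewrite vsnocM max_lift0 vconsS vsnocM.
Qed.


Definition gcons T k (x : T) (v : 'I_k -> T) : 'I_k.+1 -> T :=
  fun i => if unlift ord0 i is Some j then v j else x.
Definition gsnoc T k (v : 'I_k -> T) (x : T) : 'I_k.+1 -> T :=
  fun i => if unlift ord_max i is Some j then v j else x.
Definition gnil T : 'I_0 -> T := fun i => False_rect T (Bool.diff_false_true (ltn_ord i)).

Lemma evalr_eq k (phi : recf k) v v' y y' : evalr phi v y -> v = v' -> y = y' -> evalr phi v' y'.
Proof. by move=> H <- <-. Qed.

Lemma evs_cons k m (h0 : recf k) (hs : 'I_m -> recf k) v y0 ys :
  evalr h0 v y0 -> (forall j, evalr (hs j) v (ys j)) ->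
  forall j, evalr (gcons h0 hs j) v (vcons y0 ys j).
Proof. move=> H0 Hs j; rewrite /gcons /vcons; case: (unlift ord0 j) => //. Qed.
Lemma evs_snoc k m (h0 : recf k) (hs : 'I_m -> recf k) v y0 ys :
  evalr h0 v y0 -> (forall j, evalr (hs j) v (ys j)) ->
  forall j, evalr (gsnoc hs h0 j) v (vsnoc ys y0 j).
Proof. move=> H0 Hs j; rewrite /gsnoc /vsnoc; case: (unlift ord_max j) => //. Qed.
Lemma evs_nil k v (ys : 'I_0 -> nat) : forall j, evalr (gnil (recf k) j) v (ys j).
Proof. by case. Qed.
Lemma evs_proj k m (s : 'I_m -> 'I_k) v : forall j, evalr (rProj (s j)) v (v (s j)).
Proof. move=> j; exact: eProj. Qed.

Lemma eval_prec k (g : recf k) (h : recf k.+2) (r : 'I_k -> nat) (F : nat -> nat) :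
  evalr g r (F 0) -> (forall n, evalr h (vcons n (vcons (F n) r)) (F n.+1)) ->
  forall n, evalr (rPrec g h) (vcons n r) (F n).
Proof.
move=> Hg Hh; elim=> [|n IH].
  apply: ePrec0; first exact: vcons0. by rewrite vtail_vcons.
apply: (ePrecS (n:=n) (z:=F n)); first exact: vcons0.
  by rewrite vtail_vcons.
by rewrite vtail_vcons.
Qed.

Definition ifz (a x y : nat) := if a is 0 then x else y.

Definition vec3 (a b c : nat) : 'I_3 -> nat := vcons a (vcons b (vcons c (fun i : 'I_0 => 0))).

Definition rIfz3 : recf 3 := rPrec (rProj (ord0 : 'I_2)) (rProj (ord_max : 'I_4)).
Lemma ev_ifz3 a x y : evalr rIfz3 (vcons a (vcons x (vcons y (gnil nat)))) (ifz a x y).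
Proof.
apply: (eval_prec (F := fun a => ifz a x y)).
  apply: evalr_eq; first exact: eProj. done. by rewrite vcons0.
move=> n; apply: evalr_eq; first exact: eProj. done.
rewrite /= max_lift0 vconsS max_lift0 vconsS max_lift0 vconsS.

have ->: (ord_max : 'I_1) = ord0 by apply: val_inj. by rewrite vcons0.
Qed.

Definition rpred1 : recf 1 := rPrec (rZero 0) (rProj (ord0 : 'I_2)).
Lemma ev_pred1 a : evalr rpred1 (vcons a (gnil nat)) a.-1.
Proof.
apply: (eval_prec (F := fun a => a.-1)); first exact: eZero.
move=> n; apply: evalr_eq; first exact: eProj. done. by rewrite vcons0.
Qed.

Definition rsub2 : recf 2 := rPrec (rProj (ord0 : 'I_1))
  (rComp rpred1 (gcons (rProj (lift ord0 ord0 : 'I_3)) (gnil _))).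
Lemma ev_sub2 b a : evalr rsub2 (vcons b (vcons a (gnil nat))) (a - b).
Proof.
apply: (eval_prec (F := fun b => a - b)).
  apply: evalr_eq; first exact: eProj. done. by rewrite vcons0 subn0.
move=> n; apply: (eComp (ys := vcons (a - n) (gnil nat))).
  apply: evs_cons; last exact: evs_nil.
  apply: evalr_eq; first exact: eProj. done. by rewrite vconsS vcons0.
by rewrite subnS; apply: ev_pred1.
Qed.

Fixpoint cst k n : recf k := match n with 0 => rZero k | n'.+1 => rComp rSucc (gcons (cst k n') (gnil _)) end.
Definition rS k (e : recf k) : recf k := rComp rSucc (gcons e (gnil _)).
Definition rP k (e : recf k) : recf k := rComp rpred1 (gcons e (gnil _)).
Definition rI k (a x y : recf k) : recf k := rComp rIfz3 (gcons a (gcons x (gcons y (gnil _)))).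
Definition rSub k (b a : recf k) : recf k := rComp rsub2 (gcons b (gcons a (gnil _))).
Definition rEq k (a b : recf k) : recf k :=
  rI (rSub b a) (rI (rSub a b) (cst k 1) (cst k 0)) (cst k 0).

Lemma ev_S k (e : recf k) v a : evalr e v a -> evalr (rS e) v a.+1.
Proof.
move=> H; apply: (eComp (ys := vcons a (gnil nat))).
  by apply: evs_cons => //; exact: evs_nil.
apply: evalr_eq; first exact: eSucc. done. by rewrite vcons0.
Qed.
Lemma ev_cst k n v : evalr (cst k n) v n.
Proof. elim: n => [|n IH]; [exact: eZero | exact: ev_S]. Qed.
Lemma ev_P k (e : recf k) v a : evalr e v a -> evalr (rP e) v a.-1.
Proof.
move=> H; apply: (eComp (ys := vcons a (gnil nat))); last exact: ev_pred1.
by apply: evs_cons => //; exact: evs_nil.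
Qed.
Lemma ev_I k (a x y : recf k) v va vx vy : evalr a v va -> evalr x v vx -> evalr y v vy ->
  evalr (rI a x y) v (ifz va vx vy).
Proof.
move=> Ha Hx Hy; apply: (eComp (ys := vcons va (vcons vx (vcons vy (gnil nat))))); last exact: ev_ifz3.
by do 3 apply: evs_cons => //; exact: evs_nil.
Qed.
Lemma ev_Sub k (b a : recf k) v vb va : evalr b v vb -> evalr a v va -> evalr (rSub b a) v (va - vb).
Proof.
move=> Hb Ha; apply: (eComp (ys := vcons vb (vcons va (gnil nat)))); last exact: ev_sub2.
by do 2 apply: evs_cons => //; exact: evs_nil.
Qed.
Lemma ev_Eq k (a b : recf k) v va vb : evalr a v va -> evalr b v vb -> evalr (rEq a b) v (va == vb).
Proof.
move=> Ha Hb; apply: evalr_eq.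
  apply: ev_I; first exact: ev_Sub Hb Ha.
    apply: ev_I; [exact: ev_Sub Ha Hb | exact: ev_cst | exact: ev_cst].
  exact: ev_cst.
  done.
rewrite /ifz eqn_leq -!subn_eq0.
by case: (va - vb) => [|?]; case: (vb - va).
Qed.


Fixpoint allnz m : ('I_m -> nat) -> nat :=
  match m with 0 => fun _ => 1
  | m'.+1 => fun c => ifz (c ord0) 0 (allnz (fun j => c (lift ord0 j))) end.
Fixpoint rAll k m : ('I_m -> recf k) -> recf k :=
  match m with 0 => fun _ => cst k 1
  | m'.+1 => fun hs => rI (hs ord0) (cst k 0) (rAll (fun j => hs (lift ord0 j))) end.
Lemma ev_All k m (hs : 'I_m -> recf k) v cs :
  (forall j, evalr (hs j) v (cs j)) -> evalr (rAll hs) v (allnz cs).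
Proof.
elim: m hs cs => [|m IH] hs cs H; first by change (evalr (cst k 1) v 1); exact: ev_cst.
change (evalr (rI (hs ord0) (cst k 0) (rAll (fun j => hs (lift ord0 j)))) v
   (ifz (cs ord0) 0 (allnz (fun j => cs (lift ord0 j))))).
apply: ev_I => //; first exact: ev_cst. exact: IH.
Qed.

Fixpoint precit (G : nat) (H : nat -> nat -> nat) n :=
  match n with 0 => G | i.+1 => let c := precit G H i in ifz c 0 (H i c.-1) end.
Fixpoint muit (T : nat -> nat) n :=
  match n with 0 => 1 | i.+1 => let s := muit T i in ifz s 0 (ifz s.-1 (T i) s) end.

Fixpoint evc (f : nat) k (phi : recf k) : ('I_k -> nat) -> nat :=
  match phi in recf k return ('I_k -> nat) -> nat with
  | rZero _ => fun _ => 1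
  | rSucc => fun v => (v ord0).+2
  | rProj _ i => fun v => (v i).+1
  | rComp _ _ g hs => fun v =>
      ifz (allnz (fun j => evc f (hs j) v)) 0 (evc f g (fun j => (evc f (hs j) v).-1))
  | rPrec _ g h => fun w =>
      precit (evc f g (vtail w)) (fun i z => evc f h (vcons i (vcons z (vtail w)))) (w ord0)
  | rMu _ h => fun v =>
      (muit (fun i => let c := evc f h (vcons i v) in ifz c 0 (ifz c.-1 i.+2 1)) f).-1
  end.

Fixpoint cmpl k (phi : recf k) : recf k.+1 :=
  match phi in recf k return recf k.+1 with
  | rZero k => cst k.+1 1
  | rSucc => rS (rS (rProj (lift ord_max ord0)))
  | rProj k i => rS (rProj (lift ord_max i))
  | rComp k m g hs =>
      rI (rAll (fun j => cmpl (hs j))) (cst _ 0)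
         (rComp (cmpl g) (gsnoc (fun j => rP (cmpl (hs j))) (rProj ord_max)))
  | rPrec k g h =>
      rPrec (cmpl g)
        (rI (rProj (lift ord0 ord0)) (cst _ 0)
           (rComp (cmpl h)
              (gsnoc (gcons (rProj ord0) (gcons (rP (rProj (lift ord0 ord0)))
                         (fun j => rProj (lift ord0 (lift ord0 (lift ord_max j))))))
                     (rProj (lift ord0 (lift ord0 ord_max))))))
  | rMu k h =>
      let i := rProj ord0 in
      let s := rProj (lift ord0 ord0) in
      let c := rComp (cmpl h) (gsnoc (gcons i (fun j => rProj (lift ord0 (lift ord0 (lift ord_max j)))))
                       (rProj (lift ord0 (lift ord0 ord_max)))) in
      let T := rI c (cst _ 0) (rI (rP c) (rS (rS i)) (cst _ 1)) in
      let MI := rPrec (cst k.+1 1) (rI s (cst _ 0) (rI (rP s) T s)) in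
      rP (rComp MI (gcons (rProj ord_max) (fun j => rProj j)))
  end.

Arguments cst : simpl never.
Lemma ev_proj_at k (v : 'I_k -> nat) i y : v i = y -> evalr (rProj i) v y.
Proof. by move=> <-; exact: eProj. Qed.

Lemma cmpl_ok k (phi : recf k) v f : evalr (cmpl phi) (vsnoc v f) (evc f phi v).
Proof.
elim: phi v => {k}.
- move=> k v; by change (evalr (cst k.+1 1) (vsnoc v f) 1); exact: ev_cst.
- move=> v; apply: ev_S; apply: ev_S; apply: ev_proj_at; exact: vsnocS.
- move=> k i v; apply: ev_S; apply: ev_proj_at; exact: vsnocS.
- move=> k m g IHg hs IHh v /=.
  apply: ev_I; [exact: ev_All | exact: ev_cst |].
  apply: (eComp (ys := vsnoc (fun j => (evc f (hs j) v).-1) f)); last exact: IHg.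
  apply: evs_snoc; first by apply: ev_proj_at; exact: vsnocM.
  move=> j; apply: ev_P; exact: IHh.
- move=> k g IHg h IHh w /=.
  have -> : vsnoc w f = vcons (w ord0) (vsnoc (vtail w) f) by rewrite -vsnoc_vcons vcons_eta.
  apply: eval_prec; first exact: IHg.
  move=> n /=.
  apply: ev_I; [by apply: ev_proj_at; rewrite vconsS vcons0 | exact: ev_cst |].
  set c := precit _ _ n.
  apply: (eComp (ys := vsnoc (vcons n (vcons c.-1 (vtail w))) f)); last exact: IHh.
  apply: evs_snoc; first by apply: ev_proj_at; rewrite !vconsS vsnocM.
  apply: evs_cons; first by apply: ev_proj_at; rewrite vcons0.
  apply: evs_cons; first by apply: ev_P; apply: ev_proj_at; rewrite vconsS vcons0.
  move=> j; apply: ev_proj_at; by rewrite !vconsS vsnocS.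
- move=> k h IHh v /=.
  apply: ev_P.
  pose T := fun i : nat => ifz (evc f h (vcons i v)) 0 (ifz (evc f h (vcons i v)).-1 i.+2 1).
  rewrite -/T.
  apply: (eComp (ys := vcons f (vsnoc v f))).
    apply: evs_cons; first by apply: ev_proj_at; rewrite vsnocM.
    by move=> j; exact: eProj.
  apply: (eval_prec (F := muit T)); first exact: ev_cst.
  move=> n /=.
  have Hs : evalr (rProj (lift ord0 ord0)) (vcons n (vcons (muit T n) (vsnoc v f))) (muit T n).
    by apply: ev_proj_at; rewrite vconsS vcons0.
  apply: ev_I => //; first exact: ev_cst.
  apply: ev_I => //; first exact: ev_P.
  have Hc : evalr (rComp (cmpl h) (gsnoc (gcons (rProj ord0)
       (fun j => rProj (lift ord0 (lift ord0 (lift ord_max j))))) (rProj (lift ord0 (lift ord0 ord_max)))))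
      (vcons n (vcons (muit T n) (vsnoc v f))) (evc f h (vcons n v)).
    apply: (eComp (ys := vsnoc (vcons n v) f)); last exact: IHh.
    apply: evs_snoc; first by apply: ev_proj_at; rewrite !vconsS vsnocM.
    apply: evs_cons; first by apply: ev_proj_at; rewrite vcons0.
    move=> j; apply: ev_proj_at; by rewrite !vconsS vsnocS.
  rewrite /T /=.
  apply: ev_I => //; first exact: ev_cst.
  apply: ev_I; [exact: ev_P | | exact: ev_cst].
  apply: ev_S; apply: ev_S; apply: ev_proj_at; by rewrite vcons0.
Qed.


Lemma ifzS a b y : ifz a 0 b = y.+1 -> a <> 0 /\ b = y.+1.
Proof. by case: a. Qed.

Lemma allnz_nz m (cs : 'I_m -> nat) : allnz cs <> 0 -> forall j, cs j <> 0.
Proof.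
elim: m cs => [|m IH] cs /=; first by move=> _ [].
case E: (cs ord0) => [|c] //= H j.
case: (unliftP ord0 j) => [j'|] ->; last by rewrite E.
exact: (IH (fun j => cs (lift ord0 j))).
Qed.
Lemma allnz_one m (cs : 'I_m -> nat) : (forall j, cs j <> 0) -> allnz cs = 1.
Proof.
elim: m cs => [|m IH] cs //= H.
case E: (cs ord0) => [|c] /=; first by have := H ord0; rewrite E.
by apply: IH => j; apply: H.
Qed.

Section Mu.
Variable T : nat -> nat.
Hypothesis HT : forall i, T i = 0 \/ T i = 1 \/ T i = i.+2.
Lemma muit_one i : muit T i = 1 -> forall m, m < i -> T m = 1.
Proof.
elim: i => [|i IH] //= H m.
case E: (muit T i) H => [|[|s]] //= H.
rewrite ltnS leq_eqVlt => /orP [/eqP ->|] //. exact: IH.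
Qed.
Lemma muit_found i n : muit T i = n.+2 -> [/\ n < i, T n = n.+2 & forall m, m < n -> T m = 1].
Proof.
elim: i => [|i IH] //= H.
case E: (muit T i) H => [|[|s]] //= H.
  have [H0|[H1|H2]] := HT i; rewrite H0 in H || rewrite H1 in H || idtac => //.
  have ei : n = i by move: H; rewrite H2 => -[].
  subst n; split => //; exact: muit_one.
have [a b c] := IH (etrans E H). split => //. exact: ltnW.
Qed.
Lemma muit_stay i n : muit T i = n.+2 -> forall j, i <= j -> muit T j = n.+2.
Proof.
move=> H j; elim: j => [|j IH]; first by rewrite leqn0 => /eqP E; rewrite E in H.
rewrite leq_eqVlt => /orP [/eqP <-|] //; rewrite ltnS => /IH /= ->. done.
Qed.
Lemma muit_pre n : (forall m, m < n -> T m = 1) -> forall i, i <= n -> muit T i = 1.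
Proof.
move=> H; elim=> [|i IH] // hi /=. rewrite IH ?(ltnW hi) //=. exact: H.
Qed.
Lemma muit_spec n : (forall m, m < n -> T m = 1) -> T n = n.+2 -> forall i, n < i -> muit T i = n.+2.
Proof.
move=> H1 H2 i hi; apply: (muit_stay (i := n.+1)) => //=.
by rewrite (muit_pre H1 (leqnn n)) /= H2.
Qed.
End Mu.

Lemma muT_cases f k (h : recf k.+1) v i :
  let T := fun i => ifz (evc f h (vcons i v)) 0 (ifz (evc f h (vcons i v)).-1 i.+2 1) in
  T i = 0 \/ T i = 1 \/ T i = i.+2.
Proof. rewrite /=; case: (evc f h (vcons i v)) => [|[|c]] /=; tauto. Qed.

Lemma evc_sound k (phi : recf k) f v y : evc f phi v = y.+1 -> evalr phi v y.
Proof.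
elim: phi v y => {k}.
- by move=> k v y [<-]; exact: eZero.
- by move=> v y [<-]; exact: eSucc.
- by move=> k i v y [<-]; exact: eProj.
- move=> k m g IHg hs IHh v y /= /ifzS [Ha Hb].
  have Hnz := allnz_nz Ha.
  apply: (eComp (ys := fun j => (evc f (hs j) v).-1)); last exact: IHg.
  move=> j; apply: IHh; by case: (evc f (hs j) v) (Hnz j).
- move=> k g IHg h IHh w y /=.
  set G := evc f g (vtail w); set H := fun i z => _.
  suff S : forall n y, precit G H n = y.+1 -> evalr (rPrec g h) (vcons n (vtail w)) y.
    by move/S; rewrite vcons_eta.
  elim=> [|n IH] y' /=.
    move=> HG; apply: ePrec0; first exact: vcons0. by rewrite vtail_vcons; apply: IHg.
  case E: (precit G H n) => [|c] //= Hh.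
  apply: (ePrecS (n := n) (z := c)); first exact: vcons0.
    by rewrite vtail_vcons; apply: IH.
  by rewrite vtail_vcons; apply: IHh.
- move=> k h IHh v y /= Hm.
  set T := fun i => _ in Hm.
  have HT : forall i, T i = 0 \/ T i = 1 \/ T i = i.+2 by move=> i; exact: muT_cases.
  have Hm' : muit T f = y.+2 by move: Hm; case: (muit T f) => [|[|]] //= n ->.
  have [a b c] := muit_found HT Hm'.
  apply: (eMu (zs := fun m => (evc f h (vcons m v)).-1)).
    apply: IHh. move: b; rewrite /T /=.
    by case: (evc f h (vcons y v)) => [|[|e]] //= [] /eqP; rewrite ?gtn_eqF.
  move=> m hm; have := c m hm; rewrite /T /=.
  case E: (evc f h (vcons m v)) => [|[|e]] //= _; split => //. by apply: IHh; rewrite E.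
Qed.

Lemma fin_bound m (P : 'I_m -> nat -> Prop) :
  (forall j, exists f0, forall f, f0 <= f -> P j f) -> exists F, forall j f, F <= f -> P j f.
Proof.
elim: m P => [|m IH] P H; first by exists 0; case.
have [F1 H1] := IH (fun j => P (lift ord0 j)) (fun j => H (lift ord0 j)).
have [F0 H0] := H ord0.
exists (maxn F0 F1) => j f hf; case: (unliftP ord0 j) => [j'|] ->.
  by apply: H1; apply: leq_trans hf; exact: leq_maxr.
by apply: H0; apply: leq_trans hf; exact: leq_maxl.
Qed.
Lemma nat_bound n (P : nat -> nat -> Prop) :
  (forall m, m < n -> exists f0, forall f, f0 <= f -> P m f) ->
  exists F, forall m f, m < n -> F <= f -> P m f.
Proof.
elim: n => [|n IH] H; first by exists 0.
have [F1 H1] := IH (fun m hm => H m (ltnW hm)).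
have [F0 H0] := H n (ltnSn n).
exists (maxn F0 F1) => m f; rewrite ltnS leq_eqVlt => /orP [/eqP ->|hm] hf.
  by apply: H0; apply: leq_trans hf; exact: leq_maxl.
by apply: H1 => //; apply: leq_trans hf; exact: leq_maxr.
Qed.

Fixpoint evc_complete k (phi : recf k) v y (H : evalr phi v y) {struct H} :
  exists f0, forall f, f0 <= f -> evc f phi v = y.+1.
Proof.
case: H.
- by move=> k' v'; exists 0.
- by move=> v'; exists 0.
- by move=> k' i v'; exists 0.
- move=> k' m g hs v' ys y' Hs Hg.
  have [F1 H1] := fin_bound (fun j => evc_complete _ _ _ _ (Hs j)).
  have [F2 H2] := evc_complete _ _ _ _ Hg.
  exists (maxn F1 F2) => f hf /=.
  have Hj : forall j, evc f (hs j) v' = (ys j).+1.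
    by move=> j; apply: H1; apply: leq_trans hf; exact: leq_maxl.
  have -> : (fun j => (evc f (hs j) v').-1) = ys.
    by apply: functional_extensionality => j; rewrite Hj.
  rewrite allnz_one; last by move=> j; rewrite Hj.
  apply: H2; apply: leq_trans hf; exact: leq_maxr.
- move=> k' g h w y' Hw Hg.
  have [F H1] := evc_complete _ _ _ _ Hg.
  exists F => f hf /=; rewrite Hw /=; exact: H1.
- move=> k' g h w n z y' Hw Hr Hh.
  have [F1 H1] := evc_complete _ _ _ _ Hr.
  have [F2 H2] := evc_complete _ _ _ _ Hh.
  exists (maxn F1 F2) => f hf /=; rewrite Hw /=.
  have := H1 f (leq_trans (leq_maxl _ _) hf); rewrite /= vtail_vcons vcons0 => ->.
  rewrite /=; apply: H2; apply: leq_trans hf; exact: leq_maxr.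
- move=> k' h v' n zs H0 Hm.
  have [F0 HF0] := evc_complete _ _ _ _ H0.
  have [F1 HF1] := nat_bound (fun m hm => evc_complete _ _ _ _
      (match Hm m hm with conj _ H2 => H2 end)).
  exists (maxn (maxn F0 F1) n.+1) => f hf /=.
  set T := fun i => _.
  have HT : forall i, T i = 0 \/ T i = 1 \/ T i = i.+2 by move=> i; exact: muT_cases.
  rewrite (muit_spec (n := n)) //.
  + move=> m hm; rewrite /T /= HF1 //=; last first.
      by apply: leq_trans hf; exact: (leq_trans (leq_maxr F0 F1) (leq_maxl _ _)).
    by case: (Hm m hm); case: (zs m).
  + rewrite /T /= HF0 //. apply: leq_trans hf; exact: (leq_trans (leq_maxl F0 F1) (leq_maxl _ _)).
  + apply: leq_trans hf; exact: leq_maxr.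
Qed.


Lemma vapp_l m n (u : 'I_m -> nat) (w : 'I_n -> nat) (a : 'I_m) : vapp u w (lshift n a) = u a.
Proof. by rewrite /vapp -[lshift n a]/(unsplit (inl a)) unsplitK. Qed.
Lemma vapp_r m n (u : 'I_m -> nat) (w : 'I_n -> nat) (b : 'I_n) : vapp u w (rshift m b) = w b.
Proof. by rewrite /vapp -[rshift m b]/(unsplit (inr b)) unsplitK. Qed.

Fixpoint lastnz (e : nat -> nat) n :=
  match n with 0 => 0 | i.+1 => ifz (e i) (lastnz e i) (e i) end.

Lemma lastnz_spec e n c : lastnz e n = c.+1 ->
  exists t, [/\ t < n, e t = c.+1 & forall t', t < t' -> t' < n -> e t' = 0].
Proof.
elim: n => [|n IH] //=.
case E: (e n) => [|d] /= H.
  have [t [a b c']] := IH H; exists t; split => //; first exact: ltnW.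
  move=> t' h1; rewrite ltnS leq_eqVlt => /orP [/eqP ->|] //; exact: c'.
exists n; split => //; first by rewrite E H.
by move=> t' h1 h2; move: (leq_trans h2 h1); rewrite ltnn.
Qed.
Lemma lastnz_ge e n t0 : e t0 <> 0 -> t0 < n ->
  exists t c, [/\ t0 <= t, t < n, e t = c.+1 & lastnz e n = c.+1].
Proof.
move=> H0; elim: n => [|n IH] //.
rewrite ltnS leq_eqVlt => /orP [/eqP <-|/IH [t [c [a b d g]]]] /=.
  case E: (e t0) H0 => [|c] // _; exists t0, c; split => //=; by rewrite E.
case E: (e n) => [|c'] /=.
  exists t, c; split => //; exact: ltnW.
exists n, c'; split; [exact: leq_trans a (ltnW b) | done | done | done].
Qed.

Section SR.
Variable k : nat.
Variable phi : recf (k + 1).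
Definition Ev (u : 'I_k -> nat) m t := evc m phi (vapp u (fun _ => t)).
Definition Sv (u : 'I_k -> nat) m := lastnz (Ev u m) m.

Definition SIT : recf k.+2 :=
  let c := rComp (cmpl phi)
     (gsnoc (fun j : 'I_(k+1) => match split j with
                | inl a => rProj (lift ord0 (lift ord0 (lift ord_max a)))
                | inr _ => rProj ord0 end)
            (rProj (lift ord0 (lift ord0 ord_max)))) in
  rPrec (cst k.+1 0) (rI c (rProj (lift ord0 ord0)) c).
Definition SREC : recf k.+1 := rComp SIT (gcons (rProj ord_max) (fun j => rProj j)).

Lemma ev_SREC u m : evalr SREC (vsnoc u m) (Sv u m).
Proof.
apply: (eComp (ys := vcons m (vsnoc u m))).
  apply: evs_cons; first by apply: ev_proj_at; rewrite vsnocM.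
  by move=> j; exact: eProj.
apply: (eval_prec (F := lastnz (Ev u m))); first exact: ev_cst.
move=> n.
have Hc : evalr (rComp (cmpl phi)
     (gsnoc (fun j : 'I_(k+1) => match split j with
                | inl a => rProj (lift ord0 (lift ord0 (lift ord_max a)))
                | inr _ => rProj ord0 end)
            (rProj (lift ord0 (lift ord0 ord_max)))))
     (vcons n (vcons (lastnz (Ev u m) n) (vsnoc u m))) (Ev u m n).
  apply: (eComp (ys := vsnoc (vapp u (fun _ => n)) m)); last exact: cmpl_ok.
  apply: evs_snoc; first by apply: ev_proj_at; rewrite !vconsS vsnocM.
  move=> j; rewrite /vapp; case: (split j) => [a|b].
    by apply: ev_proj_at; rewrite !vconsS vsnocS.
  by apply: ev_proj_at; rewrite vcons0.
apply: ev_I => //. by apply: ev_proj_at; rewrite vconsS vcons0.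
Qed.
End SR.


Section Math.
Variables (X : seq bcomp) (D : Type) (lt' : D -> D -> Prop) (rho : nat -> D).
Hypothesis Hrho : bijective rho.
Hypothesis Hpo : strict_po lt'.
Variables (fx : bel X -> nat -> option D) (g : bel X -> option D).
Hypothesis Hmono : forall x t t' d d', t <= t' -> fx x t = Some d -> fx x t' = Some d' ->
    d = d' \/ lt' d d'.
Hypothesis Hmax : forall x,
    (g x <> None <-> (finite_set D (vals X D fx x) /\ exists e, vals X D fx x e)) /\
    (forall d, g x = Some d ->
       vals X D fx x d /\ forall e, vals X D fx x e -> e = d \/ lt' e d).
Variable phi : recf (size X + 1).
Hypothesis hphi : forall x (v : 'I_1 -> nat) y,
    evalr phi (vapp (enc x) v) y <-> fx x (v ord0) = Some (rho y).

Definition S x m := Sv phi (enc x) m.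
Definition le' a b := a = b \/ lt' a b.

Lemma le'_trans a b c : le' a b -> le' b c -> le' a c.
Proof.
case: Hpo => _ Ht [->|H1] [<-|H2]; rewrite /le'; auto.
right; exact: Ht H1 H2.
Qed.
Lemma le'_anti a b : le' a b -> le' b a -> a = b.
Proof.
case: Hpo => Hi Ht [->|H1] // [->|H2] //. by case: (Hi a (Ht _ _ _ H1 H2)).
Qed.
Lemma rho_inj : injective rho.
Proof. exact: bij_inj. Qed.
Lemma rho_surj d : exists y, d = rho y.
Proof. case: Hrho => ri _ K; exists (ri d); by rewrite K. Qed.

Lemma F1 x m t y : Ev phi (enc x) m t = y.+1 -> fx x t = Some (rho y).
Proof. move=> /evc_sound H. exact: (proj1 (hphi x (fun _ => t) y) H). Qed.
Lemma F2 x t y : fx x t = Some (rho y) -> exists f0, forall m, f0 <= m -> Ev phi (enc x) m t = y.+1.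
Proof. move=> H; apply: evc_complete. exact: (proj2 (hphi x (fun _ => t) y) H). Qed.

Lemma val_S x t y : fx x t = Some (rho y) ->
  exists m c, S x m = c.+1 /\ le' (rho y) (rho c).
Proof.
move=> H; have [f0 Hf] := F2 H.
set m := maxn f0 t.+1.
have Hm : Ev phi (enc x) m t = y.+1 by apply: Hf; exact: leq_maxl.
have H0 : Ev phi (enc x) m t <> 0 by rewrite Hm.
have [t' [c [a b e l]]] := @lastnz_ge (Ev phi (enc x) m) m t H0 (leq_maxr _ _).
exists m, c; split => //.
exact: (Hmono a H (F1 e)).
Qed.
Lemma S_val x m c : S x m = c.+1 -> vals X D fx x (rho c).
Proof. move=> /lastnz_spec [t [_ e _]]; exists t; exact: F1 e. Qed.

Definition condS (s n : nat) := s = 0 \/ s.-1 = n \/ lt' (rho s.-1) (rho n).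

Fixpoint collect x n : list D :=
  match n with 0 => nil | n'.+1 => match fx x n' with Some e => e :: collect x n' | None => collect x n' end end.
Lemma collect_in x n t e : t < n -> fx x t = Some e -> List.In e (collect x n).
Proof.
elim: n => [|n IH] //; rewrite ltnS leq_eqVlt => /orP [/eqP ->|ht] H /=.
  by rewrite H; left.
case: (fx x n) => [e'|]; [right|]; exact: IH.
Qed.
Lemma collect_val x n e : List.In e (collect x n) -> vals X D fx x e.
Proof.
elim: n => [|n IH] //=; case E: (fx x n) => [e'|] H.
  case: H => [<-|H]; [by exists n | exact: IH H].
exact: IH H.
Qed.

Lemma graph_iff x n : g x = Some (rho n) <->
  (exists m, S x m = n.+1) /\ (forall m, condS (S x m) n).
Proof.
have [Hdom Hval] := Hmax x.
split.
- move=> Hg; have [[t0 Ht0] Hle] := Hval _ Hg.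
  split.
    have [m [c [Hm Hc]]] := val_S Ht0.
    exists m; rewrite Hm; congr (_.+1).
    apply: rho_inj; apply: le'_anti => //; exact: Hle (S_val Hm).
  move=> m; rewrite /condS; case E: (S x m) => [|c]; [by left | right] => /=.
  case: (Hle _ (S_val E)) => [/rho_inj ->|H]; auto.
- move=> [[m Hm] HB].
  have Hall : forall e, vals X D fx x e -> le' e (rho n).
    move=> e [t Ht]; have [y ey] := rho_surj e; subst e.
    have [m' [c [Hm' Hc]]] := val_S Ht.
    apply: (le'_trans Hc); case: (HB m') => [|[]]; rewrite Hm' //= => H; [by rewrite H; left | by right].
  have [t0 Ht0] := S_val Hm.
  have Hfin : finite_set D (vals X D fx x).
    exists (rho n :: collect x t0) => e; split.
      move=> [t Ht]; case: (leqP t0 t) => ht.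
        left; apply: le'_anti; first exact: Hmono ht Ht0 Ht.
        by apply: Hall; exists t.
      right; exact: collect_in ht Ht.
    by move=> [<-|/collect_val] //; exists t0.
  have : g x <> None by apply/Hdom; split => //; exists (rho n), t0.
  case E: (g x) => [d|] // _.
  have [Hd Hle] := Hval _ E.
  congr Some; apply: le'_anti; first exact: Hall.
  apply: Hle; by exists t0.
Qed.

Variable psi : recf 2.
Hypothesis hpsi : forall a b,
  (lt' (rho a) (rho b) -> evalr psi (vcons a (vcons b (gnil nat))) 1) /\
  (~ lt' (rho a) (rho b) -> evalr psi (vcons a (vcons b (gnil nat))) 0).

Definition lb a b : nat := if excluded_middle_informative (lt' (rho a) (rho b)) then 1 else 0.
Lemma ev_lb a b : evalr psi (vcons a (vcons b (gnil nat))) (lb a b).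
Proof. rewrite /lb; case: excluded_middle_informative => H; [exact: (proj1 (hpsi a b)) | exact: (proj2 (hpsi a b))]. Qed.

Definition condv s n := ifz s 1 (ifz (s.-1 == n) (lb s.-1 n) 1).
Lemma condv01 s n : condv s n = 0 \/ condv s n = 1.
Proof. rewrite /condv /lb; case: s => [|s] /=; auto; case: (_ == _) => /=; auto. case: excluded_middle_informative; auto. Qed.
Lemma condv_spec s n : condv s n = 1 <-> condS s n.
Proof.
rewrite /condv /condS /lb; case: s => [|s] /=; first by split => //; left.
case: eqP => [->|ne] /=; first by split => // _; right; left.
case: excluded_middle_informative => H /=; split => //; first by move=> _; right; right.
by case=> [//|[]].
Qed.

Local Notation K := (size X).
Definition W0 : recf (K + 2) := rProj (rshift K ord0).
Definition W1 : recf (K + 2) := rProj (rshift K ord_max).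
Definition callS (e : recf (K + 2)) : recf (K + 2) :=
  rComp (SREC phi) (gsnoc (fun a => rProj (lshift 2 a)) e).
Definition callLT (a b : recf (K + 2)) : recf (K + 2) := rComp psi (gcons a (gcons b (gnil _))).
Definition condR (s n : recf (K + 2)) : recf (K + 2) :=
  rI s (cst _ 1) (rI (rEq (rP s) n) (callLT (rP s) n) (cst _ 1)).

Lemma ev_W0 x w : evalr W0 (vapp (enc x) w) (w ord0).
Proof. by apply: ev_proj_at; rewrite vapp_r. Qed.
Lemma ev_W1 x w : evalr W1 (vapp (enc x) w) (w ord_max).
Proof. by apply: ev_proj_at; rewrite vapp_r. Qed.
Lemma ev_callS x w e m : evalr e (vapp (enc x) w) m -> evalr (callS e) (vapp (enc x) w) (S x m).
Proof.
move=> He; apply: (eComp (ys := vsnoc (enc x) m)); last exact: ev_SREC.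
apply: evs_snoc => // a; apply: ev_proj_at; by rewrite vapp_l.
Qed.
Lemma ev_condR x w s n es en : evalr es (vapp (enc x) w) s -> evalr en (vapp (enc x) w) n ->
  evalr (condR es en) (vapp (enc x) w) (condv s n).
Proof.
move=> Hs Hn; apply: ev_I => //; first exact: ev_cst.
apply: ev_I; [exact: ev_Eq (ev_P Hs) Hn| |exact: ev_cst].
apply: (eComp (ys := vcons s.-1 (vcons n (gnil nat)))); last exact: ev_lb.
apply: evs_cons; first exact: ev_P. apply: evs_cons => //; exact: evs_nil.
Qed.

Lemma sigma0 j (R : bel X -> ('I_j -> nat) -> Prop) (p : recf (K + j)) (val : bel X -> ('I_j -> nat) -> nat) :
  (forall x w, evalr p (vapp (enc x) w) (val x w)) ->
  (forall x w, val x w = 0 \/ val x w = 1) ->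
  (forall x w, R x w <-> val x w = 1) -> Sigma X 0 j R.
Proof.
move=> Hp H01 HR; exists p => x w; split => H.
  by rewrite -(proj1 (HR x w) H).
case: (H01 x w) => E; first by rewrite -E.
by case: H; apply/HR.
Qed.

Lemma vsnoc0 k (v : 'I_k.+1 -> nat) m : vsnoc v m ord0 = v ord0.
Proof. by rewrite -lift_max0 vsnocS. Qed.

Definition Agr x (v : 'I_1 -> nat) := exists m, S x m = (v ord0).+1.
Definition Bgr x (v : 'I_1 -> nat) := forall m, condS (S x m) (v ord0).

Lemma SigA : Sigma X 1 1 Agr.
Proof.
exists (fun x w => ~ (S x (w ord_max) <> (w ord0).+1)); split.
  exists (fun x w => S x (w ord_max) <> (w ord0).+1); split => //.
  apply: (sigma0 (p := rI (rEq (callS W1) (rS W0)) (cst _ 1) (cst _ 0))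
                 (val := fun x w => ifz (S x (w ord_max) == (w ord0).+1) 1 0)).
  - move=> x w; apply: ev_I; [|exact: ev_cst|exact: ev_cst].
    apply: ev_Eq; [exact: ev_callS (ev_W1 x w) | exact: ev_S (ev_W0 x w)].
  - by move=> x w; case: (_ == _); auto.
  - move=> x w; case: eqP => /=; split => //.
move=> x v; split => [[m Hm]|[m Hm]]; exists m.
  by rewrite vsnocM vsnoc0 Hm.
by move: Hm; rewrite vsnocM vsnoc0; apply: NNPP.
Qed.

Lemma PiB : Pi X 1 1 Bgr.
Proof.
exists (fun x v => exists m, ~ condS (S x m) (v ord0)); split; last first.
  move=> x v; split => [H [m Hm]|H m]; first exact: Hm.
  by apply: NNPP => Hm; apply: H; exists m.
exists (fun x w => ~ condS (S x (w ord_max)) (w ord0)); split.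
  exists (fun x w => condS (S x (w ord_max)) (w ord0)); split => //.
  apply: (sigma0 (p := condR (callS W1) W0) (val := fun x w => condv (S x (w ord_max)) (w ord0))).
  - move=> x w; apply: ev_condR; [exact: ev_callS (ev_W1 x w) | exact: ev_W0].
  - move=> x w; exact: condv01.
  - move=> x w; by rewrite condv_spec.
by move=> x v; split => -[m Hm]; exists m; move: Hm; rewrite vsnocM vsnoc0.
Qed.

Lemma graph_AB x v : g x = Some (rho (v ord0)) <-> Agr x v /\ Bgr x v.
Proof. exact: graph_iff. Qed.

Lemma dom_iff x : g x <> None <->
  exists m, S x m <> 0 /\ forall M, condS (S x M) (S x m).-1.
Proof.
split.
  case E: (g x) => [d|] // _; have [n en] := rho_surj d; subst d.
  have [[m Hm] HB] := proj1 (graph_iff x n) E.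
  by exists m; rewrite Hm.
move=> [m [Hm HB]].
have : g x = Some (rho (S x m).-1).
  apply/graph_iff; split => //; exists m; by case: (S x m) Hm.
by move=> ->.
Qed.

Lemma SigDom : Sigma X 2 0 (fun x (_ : 'I_0 -> nat) => g x <> None).
Proof.
pose Q := fun x (w : 'I_1 -> nat) => S x (w ord0) <> 0 /\ forall M, condS (S x M) (S x (w ord0)).-1.
exists Q; split; last first.
  move=> x v; rewrite dom_iff; have E : forall m, vsnoc v m ord0 = m.
    move=> m; have -> : (ord0 : 'I_1) = ord_max by apply: val_inj.
    by rewrite vsnocM.
  by split => -[m Hm]; exists m; rewrite /Q ?E in Hm *.
exists (fun x w => ~ Q x w); split; last by move=> x w; split => [H|H]; [|apply: NNPP].
exists (fun x w => ~ (S x (w ord0) <> 0 /\ condS (S x (w ord_max)) (S x (w ord0)).-1)); split.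
  exists (fun x w => S x (w ord0) <> 0 /\ condS (S x (w ord_max)) (S x (w ord0)).-1); split => //.
  apply: (sigma0 (p := rI (callS W0) (cst _ 0) (condR (callS W1) (rP (callS W0))))
      (val := fun x w => ifz (S x (w ord0)) 0 (condv (S x (w ord_max)) (S x (w ord0)).-1))).
  - move=> x w; apply: ev_I; [exact: ev_callS (ev_W0 x w) | exact: ev_cst |].
    apply: ev_condR; [exact: ev_callS (ev_W1 x w) | exact: ev_P (ev_callS (ev_W0 x w))].
  - move=> x w; case: (S x (w ord0)) => [|s] /=; [auto | exact: condv01].
  - move=> x w; case: (S x (w ord0)) => [|s] /=; first by split => // -[].
    rewrite condv_spec; split => [[]|] //.
move=> x w; rewrite /Q; split.
  move=> HQ; apply: NNPP => H; apply: HQ; split.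
    move=> H0; apply: H; exists 0 => -[]; by rewrite vsnoc0.
  move=> M; apply: NNPP => HM; apply: H; exists M => -[_]; by rewrite vsnocM vsnoc0.
move=> [M HM] [H1 H2]; apply: HM; rewrite vsnocM vsnoc0; split => //.
Qed.

End Math.


Lemma generic (X : seq bcomp) (D : Type) (lt' : D -> D -> Prop) (rho : nat -> D)
  (Hrho : bijective rho) (Hpo : strict_po lt') (psi : recf 2)
  (hpsi : forall a b,
    (lt' (rho a) (rho b) -> evalr psi (vcons a (vcons b (gnil nat))) 1) /\
    (~ lt' (rho a) (rho b) -> evalr psi (vcons a (vcons b (gnil nat))) 0))
  (fx : bel X -> nat -> option D) (g : bel X -> option D)
  (Hpc : pcompD X D rho fx)
  (Hmono : forall x t t' d d', t <= t' -> fx x t = Some d -> fx x t' = Some d' ->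
    d = d' \/ lt' d d')
  (Hmax : forall x,
    (g x <> None <-> (finite_set D (vals X D fx x) /\ exists e, vals X D fx x e)) /\
    (forall d, g x = Some d ->
       vals X D fx x d /\ forall e, vals X D fx x e -> e = d \/ lt' e d)) :
  Sigma1_and_Pi1 X 1 (fun x (v : 'I_1 -> nat) => g x = Some (rho (v ord0))) /\
  Sigma X 2 0 (fun x (_ : 'I_0 -> nat) => g x <> None).
Proof.
case: Hpc => phi hphi.
split; last exact: (SigDom Hrho Hpo Hmono Hmax hphi hpsi).
exists (Agr phi), (Bgr lt' rho phi); split; first exact: SigA.
split; first exact: (PiB phi hpsi).
move=> x v; exact: (graph_AB Hrho Hpo Hmono Hmax hphi).
Qed.

Lemma v2_0 a b : vcons a (vcons b (gnil nat)) ord0 = a.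
Proof. exact: vcons0. Qed.
Lemma v2_max a b : vcons a (vcons b (gnil nat)) ord_max = b.
Proof.
rewrite (max_lift0 0) vconsS.
have -> : (ord_max : 'I_1) = ord0 by apply: val_inj. exact: vcons0.
Qed.

Unset Implicit Arguments.
Theorem mainTheorem12 (X : seq bcomp) (hX : X <> [::])
  (D : Type) (lt : D -> D -> Prop) (rho : nat -> D)
  (hD : computable_poset lt rho) (g : bel X -> option D) :
  MaxPR X D lt rho g \/ MinPR X D lt rho g ->
  Sigma1_and_Pi1 X 1 (fun x (v : 'I_1 -> nat) => g x = Some (rho (v ord0))) /\
  Sigma X 2 0 (fun x (_ : 'I_0 -> nat) => g x <> None).
Proof.
case: hD => Hb [Hi Ht] [psi0 Hpsi0].
case=> [[f [Hpc [Hm Hmx]]]|[f [Hpc [Hm Hmx]]]].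
- apply: (generic (lt' := lt) Hb (conj Hi Ht) (psi := psi0) _ Hpc Hm Hmx).
  move=> a b; have := Hpsi0 (vcons a (vcons b (gnil nat))); by rewrite v2_0 v2_max.
- have Hpo : strict_po (fun a b => lt b a).
    by split => // a b c H1 H2; exact: Ht H2 H1.
  have Hm' : forall x t t' d d', t <= t' -> f x t = Some d -> f x t' = Some d' ->
      d = d' \/ lt d' d.
    move=> x t t' d d' h H1 H2; case: (Hm x t t' d d' h H1 H2); auto.
  have Hmx' : forall x,
    (g x <> None <-> (finite_set D (vals X D f x) /\ exists e, vals X D f x e)) /\
    (forall d, g x = Some d ->
       vals X D f x d /\ forall e, vals X D f x e -> e = d \/ lt d e).
    move=> x; have [H1 H2] := Hmx x; split => // d Hd; have [H3 H4] := H2 d Hd.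
    split => // e He; case: (H4 e He); auto.
  apply: (generic Hb Hpo (psi := rComp psi0 (gcons (rProj ord_max) (gcons (rProj ord0) (gnil _)))) _ Hpc Hm' Hmx').
  move=> a b; have [P1 P0] := Hpsi0 (vcons b (vcons a (gnil nat))); rewrite v2_0 v2_max in P1 P0.
  have Hys : forall j, evalr (gcons (rProj ord_max) (gcons (rProj ord0) (gnil (recf 2))) j)
      (vcons a (vcons b (gnil nat))) (vcons b (vcons a (gnil nat)) j).
    apply: evs_cons; first by apply: ev_proj_at; exact: v2_max.
    apply: evs_cons; first by apply: ev_proj_at; exact: v2_0.
    exact: evs_nil.
  split => H; apply: (eComp (ys := vcons b (vcons a (gnil nat)))) => //; [exact: P1 | exact: P0].
Qed.
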